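(* Let $(\alpha_i)_{i\in I}$, $I=\{1,2,\dots\}\cup\{\omega\}$, be a family of non-negative reals, let $j$ be a positive integer, and let $(\beta_i)_{i\in I}$ be obtained from $(\alpha_i)$ by rearranging $\alpha_j,\alpha_{j+1}$ from smaller to larger, i.e. $\beta_j=\min(\alpha_j,\alpha_{j+1})$, $\beta_{j+1}=\max(\alpha_j,\alpha_{j+1})$, and $\beta_i=\alpha_i$ for $i\notin\{j,j+1\}$. If $\kappa_i(\alpha_i)$ and $\kappa_i(\beta_i)$ converge, then $\kappa_i(\alpha_i)\ge\kappa_i(\beta_i)$.
   Context: For a family $(\gamma_i)_{i\in I}$ of non-negative reals (with $n<\omega$ for all positive integers $n$), $\kappa_i(\gamma_i)$ is the limit of the approximants $P_0=\gamma_\omega$, $P_n=\sqrt{\gamma_1^{2^1}+\sqrt{\gamma_2^{2^2}+\dots+\sqrt{\gamma_n^{2^n}+\gamma_\omega^{2^n}}}}$ ($n$ nested roots). *)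

(* Defs.v *)
From HB Require Import structures.
From mathcomp Require Import all_boot all_order all_algebra.
From mathcomp Require Import all_classical all_reals all_analysis.
Set Implicit Arguments. Unset Strict Implicit. Unset Printing Implicit Defensive.
Import Order.TTheory GRing.Theory Num.Theory.
Local Open Scope ring_scope.

(* A family (gamma_i)_{i in I}, I = {1,2,...} u {omega}, is represented by
   g : nat -> R (g i = gamma_i for i >= 1; g 0 is unused) and w : R (= gamma_omega). *)

(* nest g w c k = sqrt(g_k^(2^k) + sqrt(g_(k+1)^(2^(k+1)) + ... +
                   sqrt(g_(k+c-1)^(2^(k+c-1)) + w^(2^(k+c-1))))), with c nested roots;
   for c = 0 it is w^(2^(k-1)). *)
Fixpoint nest (R : realType) (g : nat -> R) (w : R) (c k : nat) {struct c} : R :=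
  match c with
  | 0 => w ^+ (2 ^ k.-1)
  | c'.+1 => Num.sqrt (g k ^+ (2 ^ k) + nest g w c' k.+1)
  end.

Definition kappa_approx (R : realType) (g : nat -> R) (w : R) (n : nat) : R :=
  nest g w n 1.

(* Main.v *)
Require Import Defs.
From HB Require Import structures.
From mathcomp Require Import all_boot all_order all_algebra.
From mathcomp Require Import all_classical all_reals all_analysis.
From mathcomp Require Import lra.
Import Order.TTheory GRing.Theory Num.Theory numFieldNormedType.Exports.
Local Open Scope ring_scope.

Lemma nest_ge0 (R : realType) (g : nat -> R) (w : R) c k :
  0 <= w -> 0 <= nest g w c k.
Proof. by move=> hw; case: c => [|c] /=; [exact: exprn_ge0|exact: sqrtr_ge0]. Qed.

Lemma key_ineq (R : realType) (p q X : R) : 0 <= p -> p <= q -> 0 <= X ->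
  p + Num.sqrt (q ^+ 2 + X) <= q + Num.sqrt (p ^+ 2 + X).
Proof.
move=> hp hpq hX.
have hA := sqr_sqrtr (_ : 0 <= q ^+ 2 + X).
have hB := sqr_sqrtr (_ : 0 <= p ^+ 2 + X).
have := hA ltac:(nra); have := hB ltac:(nra).
have := sqrtr_ge0 (q ^+ 2 + X); have := sqrtr_ge0 (p ^+ 2 + X).
set A := Num.sqrt (q ^+ 2 + X); set B := Num.sqrt (p ^+ 2 + X).
move=> hB0 hA0 eB eA.
have hAq : q <= A by nra.
have hBp : p <= B by nra.
nra.
Qed.

Lemma nest_agree (R : realType) (a b : nat -> R) (w : R) (m : nat)
  (h : forall i, (m <= i)%N -> b i = a i) c k :
  (m <= k)%N -> nest b w c k = nest a w c k.
Proof.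
elim: c k => [|c IH] k hk //=.
by rewrite h // IH // (leq_trans hk).
Qed.

Theorem lemma10 (R : realType) (a b : nat -> R) (w : R) (j : nat)
  (ha : forall i, (0 < i)%N -> 0 <= a i) (hw : 0 <= w) (hj : (0 < j)%N)
  (hbj : b j = Num.min (a j) (a j.+1))
  (hbj1 : b j.+1 = Num.max (a j) (a j.+1))
  (hbi : forall i, i <> j -> i <> j.+1 -> b i = a i)
  (ca : cvgn (kappa_approx a w)) (cb : cvgn (kappa_approx b w)) :
  limn (kappa_approx b w) <= limn (kappa_approx a w).
Proof.
have agree : forall c k, (j.+2 <= k)%N -> nest b w c k = nest a w c k.
  apply: nest_agree => i hi; apply: hbi => hh; subst i.
    by rewrite ltnNge leqnSn in hi.
  by rewrite ltnn in hi.
have haj := ha j hj; have haj1 := ha j.+1 isT.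
have base : forall c, nest b w c j <= nest a w c j.
  case=> [|[|c]] //=.
    rewrite ler_wsqrtr // lerD2r; apply: lerXn2r; rewrite ?nnegrE ?hbj //.
      by rewrite le_min haj haj1.
    by rewrite ge_min lexx.
  rewrite agree //.
  have hX := @nest_ge0 R a w c j.+2 hw.
  set X := nest a w c j.+2.
  rewrite hbj hbj1.
  have e2 : forall x : R, x ^+ (2 ^ j.+1) = (x ^+ (2 ^ j)) ^+ 2.
    by move=> x; rewrite expnS mulnC exprM.
  rewrite !e2.
  case: (leP (a j) (a j.+1)) => hle.
    by [].
  have hle' := ltW hle.
  rewrite ler_wsqrtr //; apply: key_ineq.
  - exact: exprn_ge0.
  - by apply: lerXn2r; rewrite ?nnegrE.
  - exact: hX.
have step : forall d c k, (0 < k)%N -> d = (j - k)%N -> (k <= j)%N ->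
    nest b w c k <= nest a w c k.
  elim=> [|d IH] c k hk hd hkj.
    have -> : k = j by apply/eqP; rewrite eqn_leq hkj -subn_eq0 -hd.
    exact: base.
  case: c => [|c] //=.
  have hk1 : k <> j by move=> e; subst k; rewrite subnn in hd.
  have hk2 : k <> j.+1 by move=> e; subst k; rewrite ltnn in hkj.
  rewrite ler_wsqrtr // (hbi _ hk1 hk2).
  rewrite lerD2l; apply: IH => //.
    by rewrite subnS -hd.
  by rewrite ltn_neqAle hkj andbT; apply/eqP => e; subst k; rewrite subnn in hd.
apply: ler_lim => //; near=> n.
exact: (step (j - 1)%N n 1%N isT erefl hj).
Unshelve. all: by end_near.
Qed.
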